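(* Let $S$ be a memory system satisfying the Causality, Data Independence, Processor Symmetry and Location Symmetry assumptions, and let $n,m\ge1$. Suppose there is a simple witness $\Omega$ for $S(n,m)$ such that for every unambiguous trace $\tau$ of $S(n,m)$ and every $1\le k\le\min\{n,m\}$, the graph $G(\Omega)(\tau)$ does not have a canonical $k$-nice cycle. Then every trace of $S(n,m)$ is sequentially consistent.
   Context: Notation: $\mathbb{N}_n=\{1,\dots,n\}$, $\mathbb{W}_n=\{0,\dots,n\}$, $\mathbb{W}=\{0,1,2,\dots\}$. Memory events $E(n,m,v)=\{R,W\}\times\mathbb{N}_n\times\mathbb{N}_m\times\mathbb{W}_v$; for $e=\langle a,b,c,d\rangle$, $op(e)=a$, $proc(e)=b$, $loc(e)=c$, $data(e)=d$; $0$ models the initial value of every location. A memory system is a family $S=(S(n,m,v))_{n,m,v\ge1}$, $S(n,m,v)$ a regular set of finite runs over an alphabet $E^a(n,m,v)\supseteq E(n,m,v)$ (other letters are internal events); $S(n,m)=\bigcup_{v\ge1}S(n,m,v)$. The trace of a run is its subsequence of memory events; traces of $S(n,m,v)$ (resp. $S(n,m)$) are traces of its runs. For a sequence $\tau$ of memory events with positions $1,\dots,|\tau|$: $P(\tau,i)=\{k: proc(\tau(k))=i\}$, $L(\tau,j)=\{k: loc(\tau(k))=j\}$, $L^w(\tau,j)$, $L^r(\tau,j)$ the write/read positions in $L(\tau,j)$, $M(\tau,i)=\{\langle u,v\rangle: u,v\in P(\tau,i), u<v\}$. $\tau$ is unambiguous if for every $j$ and $x\in L^w(\tau,j)$, $data(\tau(x))\ne0$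 and $data(\tau(x))\ne data(\tau(y))$ for all $y\in L^w(\tau,j)\setminus\{x\}$. Assumptions. Causality: for all $n,m,v$, every trace $\tau$ of $S(n,m,v)$, every $j$ and $x\in L^r(\tau,j)$, either $data(\tau(x))=0$ or some $y\in L^w(\tau,j)$ has $data(\tau(y))=data(\tau(x))$. Data Independence: with renaming functions $\lambda:\mathbb{N}_m\times\mathbb{W}\to\mathbb{W}$, $\lambda(j,0)=0$, and $\lambda^d(\langle a,b,c,d\rangle)=\langle a,b,c,\lambda(c,d)\rangle$ letterwise, for all $n,m,v$ and $\tau\in E(n,m,v)^*$: $\tau$ is a trace of $S(n,m,v)$ iff $\tau=\lambda^d(\tau')$ for some unambiguous trace $\tau'$ of $S(n,m)$ and renaming function $\lambda$ with values in $\mathbb{W}_v$. Processor Symmetry: for all $n,m,v$, every permutation $\lambda$ of $\mathbb{N}_n$ and trace $\tau$ of $S(n,m,v)$, $\lambda^p(\tau)$ is a trace of $S(n,m,v)$, where $\lambda^p(\langle a,b,c,d\rangle)=\langle a,\lambda(b),c,d\rangle$ letterwise. Location Symmetry: likewise for permutations $\lambda$ of $\mathbb{N}_m$ and $\lambda^l(\langle a,b,c,d\rangle)=\langle a,b,\lambda(c),d\rangle$. Sequential consistency: $\tau$ is serial if for every position $u$, with $upto(\tau,u)=\{k\le u: op(\tau(k))=W, loc(\tau(k))=loc(\tau(u))\}$, $data(\tau(u))=0$ when $upto(\tau,u)=\emptyset$, else $data(\tau(u))=data(\tau(\max upto(\tau,u)))$. $\tau$ is sequentially consistent if some permutation $f$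 of $\mathbb{N}_{|\tau|}$ satisfies (C1) $\langle u,v\rangle\in M(\tau,i)$ implies $f(u)<f(v)$, and (C2) $\tau_{f^{-1}(1)}\cdots\tau_{f^{-1}(|\tau|)}$ is serial. Witnesses: a witness $\Omega$ for $S(n,m)$ assigns to each trace $\tau$ and location $j$ a strict total order $\Omega(\tau,j)$ on $L^w(\tau,j)$; it is simple if $\langle x,y\rangle\in\Omega(\tau,j)$ iff $x<y$. For unambiguous $\tau$: $\langle x,y\rangle\in\Omega^e(\tau,j)$ (for $x,y\in L(\tau,j)$) iff (1) $data(\tau(x))=data(\tau(y))$, $op(\tau(x))=W$, $op(\tau(y))=R$; or (2) $data(\tau(x))=0\ne data(\tau(y))$; or (3) some $a,b\in L^w(\tau,j)$ have $\langle a,b\rangle\in\Omega(\tau,j)$, $data(\tau(a))=data(\tau(x))$, $data(\tau(b))=data(\tau(y))$. $G(\Omega)(\tau)$ is the directed graph on $\{1,\dots,|\tau|\}$ with edges $\bigcup_iM(\tau,i)\cup\bigcup_j\Omega^e(\tau,j)$. For $k\ge1$, $x\oplus1=x+1$ for $x<k$ and $k\oplus1=1$. A canonical $k$-nice cycle in $G(\Omega)(\tau)$ is a sequence $u_1,v_1,\dots,u_k,v_k$ of pairwise distinct vertices with $\langle u_x,v_x\rangle\in M(\tau,x)$ and $\langle v_x,u_{x\oplus1}\rangle\in\Omega^e(\tau,x\oplus1)$ for all $1\le x\le k$. *)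

(* Defs.v *)
From mathcomp Require Import all_boot all_fingroup.
Set Implicit Arguments. Unset Strict Implicit. Unset Printing Implicit Defensive.

Inductive opk := Rd | Wr.
Definition isW (o : opk) : bool := if o is Wr then true else false.
Definition isR (o : opk) : bool := if o is Rd then true else false.

Record ev := Ev { op : opk; proc : nat; loc : nat; data : nat }.
Definition ev0 : ev := Ev Rd 0 0 0.

Definition in_E (n m v : nat) (e : ev) : bool :=
  [&& 0 < proc e <= n, 0 < loc e <= m & data e <= v].

Inductive letter := Mem of ev | Int of nat.
Definition trace (r : seq letter) : seq ev :=
  pmap (fun l => if l is Mem e then Some e else None) r.

Definition regular_over (Sigma : letter -> bool) (L : seq letter -> Prop) : Prop :=
  exists (Q : finType) (q0 : Q) (F : pred Q) (d : Q -> letter -> Q),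
    forall w, L w <-> (all Sigma w /\ F (foldl d q0 w)).

(* A memory system: S n m v is a regular set of runs over a finite alphabet
   E^a(n,m,v) = E(n,m,v) plus finitely many internal letters. *)
Definition memory_system (S : nat -> nat -> nat -> seq letter -> Prop) : Prop :=
  forall n m v, 0 < n -> 0 < m -> 0 < v ->
    exists I : seq nat,
      regular_over (fun l => match l with
                             | Mem e => in_E n m v e
                             | Int i => i \in I end) (S n m v).

Definition trace_of_v S (n m v : nat) (tau : seq ev) : Prop :=
  exists r, S n m v r /\ trace r = tau.
Definition trace_of S (n m : nat) (tau : seq ev) : Prop :=
  exists v, 0 < v /\ trace_of_v S n m v tau.

(* ---------- positions (0-based: 0 .. size tau - 1) ---------- *)
Definition at_ (tau : seq ev) (k : nat) : ev := nth ev0 tau k.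
Definition inP tau i k := k < size tau /\ proc (at_ tau k) = i.
Definition inL tau j k := k < size tau /\ loc (at_ tau k) = j.
Definition inLw tau j k := inL tau j k /\ isW (op (at_ tau k)).
Definition inLr tau j k := inL tau j k /\ isR (op (at_ tau k)).
Definition Mrel tau i u v := inP tau i u /\ inP tau i v /\ u < v.

Definition unambiguous (tau : seq ev) : Prop :=
  forall j x, inLw tau j x ->
    data (at_ tau x) <> 0 /\
    (forall y, inLw tau j y -> y <> x -> data (at_ tau x) <> data (at_ tau y)).

Definition causality S : Prop :=
  forall n m v tau, 0 < n -> 0 < m -> 0 < v -> trace_of_v S n m v tau ->
    forall j x, inLr tau j x ->
      data (at_ tau x) = 0 \/
      exists y, inLw tau j y /\ data (at_ tau y) = data (at_ tau x).

Definition rename_d (lam : nat -> nat -> nat) (e : ev) : ev :=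
  Ev (op e) (proc e) (loc e) (lam (loc e) (data e)).

Definition data_independence S : Prop :=
  forall n m v tau, 0 < n -> 0 < m -> 0 < v -> all (in_E n m v) tau ->
    (trace_of_v S n m v tau <->
     exists tau' (lam : nat -> nat -> nat),
       unambiguous tau' /\ trace_of S n m tau' /\
       (forall j, lam j 0 = 0) /\ (forall j d, lam j d <= v) /\
       tau = map (rename_d lam) tau').

Definition perm_N (n : nat) (f : nat -> nat) : Prop :=
  (forall i, 0 < i <= n -> 0 < f i <= n) /\
  (forall i i', 0 < i <= n -> 0 < i' <= n -> f i = f i' -> i = i').

Definition rename_p (f : nat -> nat) (e : ev) : ev :=
  Ev (op e) (f (proc e)) (loc e) (data e).
Definition rename_l (f : nat -> nat) (e : ev) : ev :=
  Ev (op e) (proc e) (f (loc e)) (data e).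

Definition processor_symmetry S : Prop :=
  forall n m v f tau, 0 < n -> 0 < m -> 0 < v -> perm_N n f ->
    trace_of_v S n m v tau -> trace_of_v S n m v (map (rename_p f) tau).

Definition location_symmetry S : Prop :=
  forall n m v f tau, 0 < n -> 0 < m -> 0 < v -> perm_N m f ->
    trace_of_v S n m v tau -> trace_of_v S n m v (map (rename_l f) tau).

Definition upto (tau : seq ev) (u : nat) : seq nat :=
  [seq k <- iota 0 u.+1 | isW (op (at_ tau k)) && (loc (at_ tau k) == loc (at_ tau u))].

Definition serial (tau : seq ev) : Prop :=
  forall u, u < size tau ->
    if upto tau u is [::] then data (at_ tau u) = 0
    else data (at_ tau u) = data (at_ tau (\max_(k <- upto tau u) k)).

Definition seq_consistent (tau : seq ev) : Prop :=
  exists f : {perm 'I_(size tau)},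
    (forall i (u v : 'I_(size tau)), Mrel tau i u v -> f u < f v) /\
    serial [seq at_ tau (val ((f^-1)%g k)) | k <- enum 'I_(size tau)].

(* Omega tau j x y : <x,y> \in Omega(tau,j) *)
Definition witness S (n m : nat) (Omega : seq ev -> nat -> nat -> nat -> Prop) : Prop :=
  forall tau j, trace_of S n m tau ->
    (forall x y, Omega tau j x y -> inLw tau j x /\ inLw tau j y) /\
    (forall x, ~ Omega tau j x x) /\
    (forall x y z, Omega tau j x y -> Omega tau j y z -> Omega tau j x z) /\
    (forall x y, inLw tau j x -> inLw tau j y -> x <> y ->
                 Omega tau j x y \/ Omega tau j y x).

Definition simple_witness S (n m : nat) Omega : Prop :=
  witness S n m Omega /\
  forall tau j x y, trace_of S n m tau -> inLw tau j x -> inLw tau j y ->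
    (Omega tau j x y <-> x < y).

Definition Oext (Omega : seq ev -> nat -> nat -> nat -> Prop) tau j x y : Prop :=
  inL tau j x /\ inL tau j y /\
  ( (data (at_ tau x) = data (at_ tau y) /\ isW (op (at_ tau x)) /\ isR (op (at_ tau y)))
  \/ (data (at_ tau x) = 0 /\ data (at_ tau y) <> 0)
  \/ (exists a b, inLw tau j a /\ inLw tau j b /\ Omega tau j a b /\
        data (at_ tau a) = data (at_ tau x) /\ data (at_ tau b) = data (at_ tau y))).

Definition succk (k x : nat) : nat := if x < k then x.+1 else 1.

Definition canonical_nice_cycle Omega (tau : seq ev) (k : nat) : Prop :=
  exists u v : nat -> nat,
    (forall x y, 0 < x <= k -> 0 < y <= k ->
       u x <> v y /\ (x <> y -> u x <> u y /\ v x <> v y)) /\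
    (forall x, 0 < x <= k ->
       Mrel tau x (u x) (v x) /\ Oext Omega tau (succk k x) (v x) (u (succk k x))).

(* Main.v *)
Require Import Defs.
From mathcomp Require Import all_boot all_fingroup.
From mathcomp Require Import zify.
From Stdlib Require Import Classical.
Set Implicit Arguments. Unset Strict Implicit. Unset Printing Implicit Defensive.

Definition nx (len i : nat) := if i.+1 < len then i.+1 else 0.
Definition Cyc (e : rel nat) (len : nat) (c : nat -> nat) : Prop :=
  0 < len /\ forall i, i < len -> e (c i) (c (nx len i)).
Definition idx (len j t : nat) := if j + t < len then j + t else j + t - len.

Lemma chord e len c i j : Cyc e len c -> i < len -> j < len -> e (c i) (c j) ->
  j <> nx len i -> exists len' c', Cyc e len' c' /\ len' < len.
Proof.
move=> [Hl He] Hi Hj Eij Hne.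
exists (if j <= i then i - j + 1 else i + len - j + 1), (fun t => c (idx len j t)).
split; last first.
  move: Hne; rewrite /nx; case: ifP; case: ifP; lia.
split; first by case: ifP; lia.
move=> t Ht.
rewrite /nx; case: ifP => Ht1.
  have -> : idx len j t.+1 = nx len (idx len j t).
    move: Ht Ht1; rewrite /idx /nx; case: ifP; case: ifP; case: ifP; case: ifP; lia.
  apply: He; move: Ht Ht1; rewrite /idx; case: ifP; case: ifP; lia.
have -> : idx len j t = i by move: Ht Ht1; rewrite /idx; case: ifP; case: ifP; lia.
by have -> : idx len j 0 = j by rewrite /idx addn0 Hj.
Qed.

Lemma rot1 e len c : Cyc e len c -> Cyc e len (fun t => c (nx len t)).
Proof.
move=> [Hl He]; split=> // i Hi; apply: He.
by rewrite /nx; case: ifP; lia.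
Qed.


Section Analysis.
Variables (A B : rel nat) (cA cB : nat -> nat).
Hypothesis Airr : forall x, A x x = false.
Hypothesis Birr : forall x, B x x = false.
Hypothesis Atr : forall x y z, A x y -> A y z -> A x z.
Hypothesis Btr : forall x y z, B x y -> B y z -> B x z.
Hypothesis Ash : forall a b c d, A a b -> A c d -> cA a = cA c -> A a d \/ A c b.
Hypothesis Bsh : forall a b c d, B a b -> B c d -> cB a = cB c -> B a d \/ B c b.
Let e : rel nat := fun x y => A x y || B x y.

Definition minimal len c := Cyc e len c /\
  forall len' c', Cyc e len' c' -> len' < len -> False.

Lemma min_rot len c : minimal len c -> minimal len (fun t => c (nx len t)).
Proof. by move=> [H1 H2]; split=> //; apply: rot1. Qed.

Lemma min_len2 len c : minimal len c -> 1 < len.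
Proof.
move=> [[Hl He] _]; case: (ltnP 1 len) => // Hle.
have : e (c 0) (c (nx len 0)) by apply: He; lia.
by rewrite /nx; case: ifP => Hx; [lia| rewrite /e Airr Birr].
Qed.

Lemma nx_lt len i : 0 < len -> nx len i < len.
Proof. by rewrite /nx; case: ifP; lia. Qed.

Lemma chord_min len c i j : minimal len c -> i < len -> j < len -> e (c i) (c j) ->
  j <> nx len i -> False.
Proof.
move=> [Hc Hmin] Hi Hj Hij Hne.
have [len' [c' [Hc' Hlt]]] := chord Hc Hi Hj Hij Hne.
exact: Hmin Hc' Hlt.
Qed.

Lemma F2A len c i : minimal len c -> i < len ->
  A (c i) (c (nx len i)) -> A (c (nx len i)) (c (nx len (nx len i))) -> False.
Proof.
move=> Hm Hi H1 H2; have H2l := min_len2 Hm; have Hl : 0 < len by lia.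
apply: (chord_min (i:=i) (j:= nx len (nx len i)) Hm Hi (nx_lt _ Hl)).
  by rewrite /e (Atr H1 H2).
rewrite /nx; case: ifP; case: ifP; lia.
Qed.

Lemma F2B len c i : minimal len c -> i < len ->
  B (c i) (c (nx len i)) -> B (c (nx len i)) (c (nx len (nx len i))) -> False.
Proof.
move=> Hm Hi H1 H2; have H2l := min_len2 Hm; have Hl : 0 < len by lia.
apply: (chord_min (i:=i) (j:= nx len (nx len i)) Hm Hi (nx_lt _ Hl)).
  by rewrite /e (Btr H1 H2) orbT.
rewrite /nx; case: ifP; case: ifP; lia.
Qed.

Lemma F3A len c i j : minimal len c -> i < len -> j < len -> i <> j ->
  A (c i) (c (nx len i)) -> A (c j) (c (nx len j)) -> cA (c i) = cA (c j) -> False.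
Proof.
move=> Hm Hi Hj Hij H1 H2 Hc; have Hl : 0 < len by lia.
case: (Ash H1 H2 Hc) => H.
  apply: (chord_min (i:=i) (j:= nx len j) Hm Hi (nx_lt _ Hl)); first by rewrite /e H.
  rewrite /nx; case: ifP; case: ifP; lia.
apply: (chord_min (i:=j) (j:= nx len i) Hm Hj (nx_lt _ Hl)); first by rewrite /e H.
rewrite /nx; case: ifP; case: ifP; lia.
Qed.

Lemma F3B len c i j : minimal len c -> i < len -> j < len -> i <> j ->
  B (c i) (c (nx len i)) -> B (c j) (c (nx len j)) -> cB (c i) = cB (c j) -> False.
Proof.
move=> Hm Hi Hj Hij H1 H2 Hc; have Hl : 0 < len by lia.
case: (Bsh H1 H2 Hc) => H.
  apply: (chord_min (i:=i) (j:= nx len j) Hm Hi (nx_lt _ Hl)); first by rewrite /e H orbT.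
  rewrite /nx; case: ifP; case: ifP; lia.
apply: (chord_min (i:=j) (j:= nx len i) Hm Hj (nx_lt _ Hl)); first by rewrite /e H orbT.
rewrite /nx; case: ifP; case: ifP; lia.
Qed.
Lemma min_A0 len c : minimal len c -> exists c', minimal len c' /\ A (c' 0) (c' (nx len 0)).
Proof.
move=> Hm; have H2 := min_len2 Hm.
have [[Hl He] _] := Hm.
case HA: (A (c 0) (c (nx len 0))); first by exists c.
exists (fun t => c (nx len t)); split; first exact: min_rot.
have := He _ (nx_lt 0 Hl); rewrite /e => /orP [//|HB1].
have := He 0 Hl; rewrite /e HA /= => HB0.
by case: (F2B Hm Hl HB0 HB1).
Qed.

Lemma alternate len c : minimal len c -> A (c 0) (c (nx len 0)) ->
  forall i, i < len -> (~~ odd i -> A (c i) (c (nx len i))) /\ (odd i -> B (c i) (c (nx len i))).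
Proof.
move=> Hm HA0; have [[Hl He] _] := Hm.
elim=> [|i IH] Hi; first by split.
have [IH1 IH2] := IH (ltnW Hi).
have Hnx : nx len i = i.+1 by rewrite /nx Hi.
have E1 := He _ Hi; rewrite /e in E1.
case: (boolP (odd i)) => Ho.
- have HB0 := IH2 Ho; rewrite Hnx in HB0.
  case/orP: E1 => [HA|HB]; last first.
    by case: (F2B Hm (ltnW Hi)); rewrite Hnx.
  by split=> //=; rewrite Ho.
- have HA0' := IH1 Ho; rewrite Hnx in HA0'.
  case/orP: E1 => [HA|HB].
    by case: (F2A Hm (ltnW Hi)); rewrite Hnx.
  by split=> //=; rewrite Ho.
Qed.

Lemma extract len c : minimal len c -> exists k u v, 0 < k /\
  (forall x, 0 < x <= k -> A (u x) (v x) /\ B (v x) (u (succk k x))) /\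
  (forall x y, 0 < x <= k -> 0 < y <= k -> x <> y ->
      cA (u x) <> cA (u y) /\ cB (v x) <> cB (v y)).
Proof.
move=> Hm0; have [c0 [Hm HA0]] := min_A0 Hm0.
have H2 := min_len2 Hm; have Hl : 0 < len by lia.
have Alt := alternate Hm HA0.
have Hnxl : nx len len.-1 = 0 by rewrite /nx; case: ifP; lia.
have Hodd : odd len.-1.
  apply/negP => Ho; have := (Alt len.-1 ltac:(lia)).1 (introT negP Ho).
  rewrite Hnxl => HA; apply: (F2A Hm (i:=len.-1)); first lia.
    by rewrite Hnxl. by rewrite Hnxl.
have Hev : len = (len./2).*2.
  have := odd_double_half len; have -> : odd len = false.
    by move: Hodd; rewrite -{2}(prednK Hl) /= => ->.
  by rewrite add0n => ->.
set k := len./2 in Hev.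
have AE : forall x, 0 < x <= k -> A (c0 (x.-1).*2) (c0 ((x.-1).*2).+1).
  move=> x Hx; have Hi1 : (x.-1).*2 < len by lia.
  have [Ha _] := Alt _ Hi1; have := Ha ltac:(by rewrite odd_double).
  by rewrite /nx ifT; last by lia.
have BE : forall x, 0 < x <= k -> B (c0 ((x.-1).*2).+1) (c0 (nx len ((x.-1).*2).+1)).
  move=> x Hx; have Hi1 : ((x.-1).*2).+1 < len by lia.
  have [_ Hb] := Alt _ Hi1; apply: Hb; by rewrite /= odd_double.
exists k, (fun x => c0 (x.-1).*2), (fun x => c0 ((x.-1).*2).+1).
split; first by lia.
split.
  move=> x Hx; split; first exact: AE.
  have := BE _ Hx.
  rewrite /nx /succk; case: ifP; case: ifP => Q1 Q2 //.
  - by rewrite (_ : x.+1.-1.*2 = x.-1.*2.+2); last lia.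
  - lia.
  - lia.
move=> x y Hx Hy Hxy; split.
  move=> Hc; apply: (F3A Hm (i:=(x.-1).*2) (j:=(y.-1).*2)) Hc; try lia.
  - by rewrite /nx ifT; [apply: AE|lia].
  - by rewrite /nx ifT; [apply: AE|lia].
move=> Hc; apply: (F3B Hm (i:=((x.-1).*2).+1) (j:=((y.-1).*2).+1)) Hc; try lia.
- exact: BE.
- exact: BE.
Qed.
End Analysis.


Lemma ex_min (A B : rel nat) : (exists len c, Cyc (fun x y => A x y || B x y) len c) ->
  exists len c, minimal A B len c.
Proof.
move=> [len [c H]].
suff: forall N len c, len <= N -> Cyc (fun x y => A x y || B x y) len c ->
  exists len c, minimal A B len c by move=> /(_ len len c (leqnn _) H).
elim=> [|N IH] l c' Hl Hc.
  by case: Hc => Hp _; lia.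
case: (classic (exists len' c'', Cyc (fun x y => A x y || B x y) len' c'' /\ len' < l)).
  move=> [l' [c'' [Hc'' Hlt]]]; apply: (IH l' c'') => //; lia.
move=> Hn; exists l, c'; split=> // l' c'' Hc'' Hlt; apply: Hn; by exists l', c''.
Qed.

Lemma max_eq (l : seq nat) a : a \in l -> (forall b, b \in l -> b <= a) ->
  \max_(k <- l) k = a.
Proof.
move=> Ha Hb; apply/eqP; rewrite eqn_leq; apply/andP; split.
  by apply/bigmax_leqP_seq => i Hi _; apply: Hb.
exact: (@leq_bigmax_seq _ l (fun _ => true) (fun k => k) a Ha).
Qed.

Definition pw (x e : ev) := isW (op e) && (loc e == loc x) && (data e == data x).
Definition key tau x := let ex := at_ tau x in
  if data ex == 0 then 0 else (find (pw ex) tau).*2 + 2 + isR (op ex).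
Definition Mb tau : rel nat := fun x y =>
  (y < size tau) && (x < y) && (proc (at_ tau x) == proc (at_ tau y)).
Definition Lb tau : rel nat := fun x y =>
  (x < size tau) && (y < size tau) && (loc (at_ tau x) == loc (at_ tau y)) && (key tau x < key tau y).

Lemma isW_R o : isW o = ~~ isR o. Proof. by case: o. Qed.

Section Core.
Variable tau : seq ev.
Hypothesis Hun : unambiguous tau.
Hypothesis Hcaus : forall j x, inLr tau j x -> data (at_ tau x) = 0 \/
   exists y, inLw tau j y /\ data (at_ tau y) = data (at_ tau x).

Lemma find_w x y : y < size tau -> pw (at_ tau x) (at_ tau y) ->
  find (pw (at_ tau x)) tau = y.
Proof.
move=> Hy Hp.
have Hh : has (pw (at_ tau x)) tau by apply/(has_nthP ev0); exists y.
have Hi := Hh; rewrite has_find in Hi.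
have Hpi := nth_find ev0 Hh.
set i := find _ _ in Hi Hpi *.
case: (i =P y) => // Hne.
move: Hp Hpi; rewrite /pw => /andP [/andP [Wy /eqP Ly] /eqP Dy] /andP [/andP [Wi /eqP Li] /eqP Di].
have [_ H] := Hun (j := loc (at_ tau x)) (x := i) (conj (conj Hi Li) Wi).
by case: (H y (conj (conj Hy Ly) Wy) (nesym Hne)); rewrite /at_ Di Dy.
Qed.

Lemma key_w y : y < size tau -> isW (op (at_ tau y)) -> key tau y = y.*2 + 2.
Proof.
move=> Hy Wy.
have [Hd _] := Hun (j := loc (at_ tau y)) (x := y) (conj (conj Hy erefl) Wy).
rewrite /key; move/eqP/negbTE: Hd => ->.
rewrite (find_w (x:=y) Hy); last by rewrite /pw Wy !eqxx.
by move: Wy; rewrite isW_R => /negbTE ->; rewrite addn0.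
Qed.

Lemma key_r x : x < size tau -> isR (op (at_ tau x)) -> data (at_ tau x) <> 0 ->
  exists w, [/\ w < size tau, isW (op (at_ tau w)), loc (at_ tau w) = loc (at_ tau x),
     data (at_ tau w) = data (at_ tau x) & key tau x = w.*2 + 3].
Proof.
move=> Hx Rx Hd.
case: (Hcaus (j := loc (at_ tau x)) (x := x) (conj (conj Hx erefl) Rx)) => // [[w [[[Hw Lw] Ww] Dw]]].
exists w; split=> //.
rewrite /key; move/eqP/negbTE: Hd => ->.
rewrite (find_w (x:=x) Hw); last by rewrite /pw Ww Lw Dw !eqxx.
by rewrite Rx; lia.
Qed.

Lemma key0 x : (key tau x == 0) = (data (at_ tau x) == 0).
Proof. by rewrite /key; case: ifP => //; lia. Qed.


Section Acyc.
Hypothesis Hacyc : forall len c, ~ Cyc (fun x y => Mb tau x y || Lb tau x y) len c.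
Local Notation N := (size tau).
Definition E' : rel 'I_N := fun x y => Mb tau x y || Lb tau x y.

Lemma noback (x y : 'I_N) : E' x y -> ~~ connect E' y x.
Proof.
move=> Hxy; apply/negP => /connectP [p Hp Hl].
apply: (Hacyc (len := (size p).+1) (c := fun i => val (nth x (y :: p) i))).
split=> // i Hi.
rewrite /nx; case: ifP => Hi1.
  have Hi' : i < size p by move: Hi1; rewrite ltnS.
  move/(pathP x): Hp => /(_ i Hi'); by [].
have -> : i = size p by lia.
have -> : nth x (y :: p) (size p) = x.
  by rewrite Hl -[size p]/((size (y :: p)).-1) nth_last.
exact: Hxy.
Qed.

Definition anc (x : 'I_N) := #|[set z | connect E' z x]|.

Lemma anc_lt (x y : 'I_N) : E' x y -> anc x < anc y.
Proof.
move=> Hxy; apply: proper_card; apply/properP; split.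
  apply/subsetP => z; rewrite !inE => Hz.
  exact: (connect_trans Hz (connect1 Hxy)).
exists y; first by rewrite inE connect0.
by rewrite inE; apply: noback.
Qed.

Definition ltr (x y : 'I_N) := (anc x < anc y) || ((anc x == anc y) && (x < y)).

Lemma ltr_trans x y z : ltr x y -> ltr y z -> ltr x z.
Proof.
rewrite /ltr; case: (ltngtP (anc x) (anc y)); case: (ltngtP (anc y) (anc z));
  case: (ltngtP (anc x) (anc z)) => //=; lia.
Qed.
Lemma ltr_irr x : ltr x x = false.
Proof. by rewrite /ltr ltnn eqxx ltnn. Qed.
Lemma ltr_total x y : x != y -> ltr x y || ltr y x.
Proof.
move=> Hne; rewrite /ltr.
have : val x != val y by [].
case: (ltngtP (anc x) (anc y)) => //= _; lia.
Qed.

Definition fr (x : 'I_N) := #|[set z | ltr z x]|.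

Lemma fr_mono x y : ltr x y -> fr x < fr y.
Proof.
move=> Hxy; apply: proper_card; apply/properP; split.
  apply/subsetP => z; rewrite !inE => Hz; exact: ltr_trans Hz Hxy.
by exists x; rewrite inE ?ltr_irr.
Qed.

Lemma fr_lt x : fr x < N.
Proof.
rewrite -[X in _ < X]card_ord -cardsT; apply: proper_card; rewrite properT.
apply/negP => /eqP H; have : x \in [set z | ltr z x] by rewrite H inE.
by rewrite inE ltr_irr.
Qed.

Definition frO (x : 'I_N) : 'I_N := Ordinal (fr_lt x).
Lemma frO_inj : injective frO.
Proof.
move=> x y H; apply/eqP; apply/negPn/negP => Hne.
have := congr1 val H; rewrite /=.
case/orP: (ltr_total Hne) => /fr_mono; lia.
Qed.
Definition pf : {perm 'I_N} := perm frO_inj.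

Lemma pf_lt x y : (pf x < pf y) = ltr x y.
Proof.
rewrite !permE /=; apply/idP/idP; last exact: fr_mono.
move=> H; case: (x =P y) => [Exy|/eqP Hne]; first by rewrite Exy ltnn in H.
case/orP: (ltr_total Hne) => // /fr_mono; lia.
Qed.

Lemma E_ltr x y : E' x y -> ltr x y.
Proof. by move/anc_lt => H; rewrite /ltr H. Qed.

Lemma ltr_asym x y : ltr x y -> ltr y x -> False.
Proof. by move=> H1 H2; have := ltr_trans H1 H2; rewrite ltr_irr. Qed.

Lemma SC : seq_consistent tau.
Proof.
exists pf; split.
  move=> i u v [[Hu Pu] [[Hv Pv] Huv]].
  rewrite pf_lt; apply: E_ltr; rewrite /E' /Mb Hv Huv Pu Pv eqxx //.
set s := [seq _ | _ <- _].
have Hs : size s = N by rewrite size_map size_enum_ord.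
have at_s : forall b (Hb : b < N), at_ s b = at_ tau ((pf^-1)%g (Ordinal Hb)).
  move=> b Hb; rewrite /at_ (nth_map (Ordinal Hb)) ?size_enum_ord //.
  by rewrite (nth_ord_enum (Ordinal Hb) (Ordinal Hb)).
move=> u; rewrite Hs => Hu.
set x := (pf^-1)%g (Ordinal Hu).
have Hpx : val (pf x) = u by rewrite /x permKV.
have Hpx' : (pf x : nat) = u := Hpx.
have memU : forall b, b \in upto s u -> exists Hb : b < N,
   [/\ b <= u, isW (op (at_ tau ((pf^-1)%g (Ordinal Hb)))) &
       loc (at_ tau ((pf^-1)%g (Ordinal Hb))) = loc (at_ tau x)].
  move=> b; rewrite /upto mem_filter mem_iota => /andP [/andP [W /eqP L]] /andP [_ Hb].
  have Hb' : b < N by lia.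
  exists Hb'; split; first by lia.
    by rewrite -at_s.
  by rewrite -at_s L at_s.
have inU : forall y : 'I_N, pf y <= u -> isW (op (at_ tau y)) -> loc (at_ tau y) = loc (at_ tau x) ->
   val (pf y) \in upto s u.
  move=> y Hy W L; rewrite /upto mem_filter mem_iota.
  rewrite (at_s _ (ltn_ord (pf y))) (at_s _ Hu) -/x.
  have -> : Ordinal (ltn_ord (pf y)) = pf y by apply: val_inj.
  by rewrite permK W L eqxx /=; lia.
have Hx := ltn_ord x.
case: (boolP (isW (op (at_ tau x)))) => Wx.
  have Hin : u \in upto s u.
    by have := inU x (eq_leq Hpx) Wx erefl; rewrite Hpx.
  case E: (upto s u) => [|a l]; first by rewrite E in Hin.
  rewrite -E (max_eq Hin) //.
  by move=> b /memU [Hb [Hbu _ _]].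
have Rx : isR (op (at_ tau x)) by rewrite isW_R negbK in Wx.
rewrite at_s -/x.
case: (data (at_ tau x) =P 0) => Dx.
  case E: (upto s u) => [|a l] //.
  have : a \in upto s u by rewrite E mem_head.
  move=> /memU [Ha [Hau Wa La]].
  set y := (pf^-1)%g (Ordinal Ha) in Wa La.
  have Hpy : val (pf y) = a by rewrite /y permKV.
  have Hpy' : (pf y : nat) = a := Hpy.
  have Hne : a != u.
    apply/eqP => Hau'.
    have Eyx : y = x by rewrite /y /x; congr (_ _); apply: val_inj.
    by rewrite Eyx (negbTE Wx) in Wa.
  have L1 : ltr y x by rewrite -pf_lt Hpy Hpx; lia.
  have L2 : ltr x y.
    apply: E_ltr; rewrite /E' /Lb Hx (ltn_ord y) La eqxx /=.
    rewrite (key_w (ltn_ord y) Wa).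
    by rewrite /key Dx /=; lia.
  by case: (ltr_asym L1 L2).
have [w [Hw Ww Lw Dw Kx]] := key_r Hx Rx Dx.
set wO := Ordinal Hw.
have Lwx : ltr wO x.
  apply: E_ltr; rewrite /E' /Lb Hw Hx Lw eqxx /= Kx (key_w Hw Ww); lia.
have Hin : val (pf wO) \in upto s u.
  apply: inU => //; move: Lwx; rewrite -pf_lt; lia.
case E: (upto s u) => [|a l]; first by rewrite E in Hin.
rewrite -E (max_eq Hin).
  rewrite (at_s _ (ltn_ord (pf wO))).
  have -> : Ordinal (ltn_ord (pf wO)) = pf wO by apply: val_inj.
  by rewrite permK.
move=> b /memU [Hb [Hbu Wb Lb']].
set y := (pf^-1)%g (Ordinal Hb) in Wb Lb'.
have Hpy : val (pf y) = b by rewrite /y permKV.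
have Hpy' : (pf y : nat) = b := Hpy.
case: (ltngtP (y : nat) w) => Hyw.
- have : ltr y wO.
    apply: E_ltr; rewrite /E' /Lb (ltn_ord y) Hw Lb' Lw eqxx /=.
    rewrite (key_w (ltn_ord y) Wb) (key_w Hw Ww); lia.
  rewrite -pf_lt Hpy' => H; rewrite /=; lia.
- have : ltr x y.
    apply: E_ltr; rewrite /E' /Lb (ltn_ord y) Hx Lb' eqxx /=.
    rewrite (key_w (ltn_ord y) Wb) Kx; lia.
  rewrite -pf_lt Hpy' Hpx' => H; lia.
- have Eyw : y = wO by apply: val_inj.
  by rewrite -Hpy Eyw.
Qed.
End Acyc.

Lemma key_any z : z < size tau -> data (at_ tau z) <> 0 ->
  exists w, [/\ w < size tau, isW (op (at_ tau w)), loc (at_ tau w) = loc (at_ tau z),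
     data (at_ tau w) = data (at_ tau z) & key tau z = w.*2 + 2 + isR (op (at_ tau z))].
Proof.
move=> Hz Dz; case: (boolP (isW (op (at_ tau z)))) => Wz.
  exists z; split=> //; rewrite (key_w Hz Wz).
  by move: Wz; rewrite isW_R => /negbTE ->; rewrite addn0.
have Rz : isR (op (at_ tau z)) by rewrite isW_R negbK in Wz.
have [w [Hw Ww Lw Dw Kz]] := key_r Hz Rz Dz.
by exists w; split=> //; rewrite Kz Rz /= addn1 addnS.
Qed.

Lemma Lb_Oext (Omega : seq ev -> nat -> nat -> nat -> Prop) x y :
  (forall j a b, inLw tau j a -> inLw tau j b -> (Omega tau j a b <-> a < b)) ->
  Lb tau x y -> Oext Omega tau (loc (at_ tau x)) x y.
Proof.
move=> HOm /andP [/andP [/andP [Hx Hy] /eqP Lxy] Kxy].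
split; first by split.
split; first by split.
case: (data (at_ tau x) =P 0) => Dx.
  right; left; split=> // Dy.
  move: Kxy; have := key0 x; have := key0 y; rewrite Dx Dy !eqxx => /eqP -> /eqP ->; by [].
have Dy : data (at_ tau y) <> 0.
  move=> Dy; move: Kxy; have := key0 y; rewrite Dy eqxx => /eqP ->; by [].
have [a [Ha Wa La Da Ka]] := key_any Hx Dx.
have [b [Hb Wb Lb' Db Kb]] := key_any Hy Dy.
move: Kxy; rewrite Ka Kb => Kab.
case: (ltngtP a b) => Hab.
- have IA : inLw tau (loc (at_ tau x)) a by split=> //; split.
  have IB : inLw tau (loc (at_ tau x)) b by split=> //; split=> //; rewrite Lb' Lxy.
  right; right; exists a, b; split; first exact IA.
  split; first exact IB.
  split; last by split.
  by apply/(HOm _ a b IA IB).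
- lia.
- left; subst b; split; first by rewrite -Da -Db.
  move: Kab; case Rx: (isR (op (at_ tau x))); case Ry: (isR (op (at_ tau y))) => //=; try lia.
  by move=> _; rewrite isW_R Rx.
Qed.
End Core.

Lemma Mb_tr tau x y z : Mb tau x y -> Mb tau y z -> Mb tau x z.
Proof.
rewrite /Mb => /andP [/andP [H1 H2] /eqP H3] /andP [/andP [H4 H5] /eqP H6].
by rewrite H4 H3 H6 eqxx andbT; lia.
Qed.
Lemma Lb_tr tau x y z : Lb tau x y -> Lb tau y z -> Lb tau x z.
Proof.
rewrite /Lb => /andP [/andP [/andP [H1 H2] /eqP H3] H7] /andP [/andP [/andP [H4 H5] /eqP H6] H8].
by rewrite H1 H5 H3 H6 eqxx /=; lia.
Qed.
Lemma Mb_irr tau x : Mb tau x x = false.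
Proof. by rewrite /Mb ltnn andbF. Qed.
Lemma Lb_irr tau x : Lb tau x x = false.
Proof. by rewrite /Lb ltnn andbF. Qed.
Lemma Mb_sh tau a b c d : Mb tau a b -> Mb tau c d ->
  proc (at_ tau a) = proc (at_ tau c) -> Mb tau a d \/ Mb tau c b.
Proof.
rewrite /Mb => /andP [/andP [H1 H2] /eqP H3] /andP [/andP [H4 H5] /eqP H6] H7.
case: (ltnP a d) => H.
  by left; rewrite H4 H7 H6 eqxx.
by right; rewrite H1 -H3 H7 eqxx andbT; lia.
Qed.
Lemma Lb_sh tau a b c d : Lb tau a b -> Lb tau c d ->
  loc (at_ tau a) = loc (at_ tau c) -> Lb tau a d \/ Lb tau c b.
Proof.
rewrite /Lb => /andP [/andP [/andP [H1 H2] /eqP H3] H7] /andP [/andP [/andP [H4 H5] /eqP H6] H8] H9.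
case: (ltnP (key tau a) (key tau d)) => H.
  by left; rewrite H1 H5 H9 H6 eqxx.
by right; rewrite H4 H2 -H9 H3 eqxx /=; lia.
Qed.

Lemma mk_perm n (P : seq nat) : uniq P -> all (fun x => 0 < x <= n) P ->
  exists f, perm_N n f /\ forall i, i < size P -> f (nth 0 P i) = i.+1.
Proof.
move=> UP AP.
set Q := [seq x <- iota 1 n | x \notin P].
have UPQ : uniq (P ++ Q).
  rewrite cat_uniq UP filter_uniq ?iota_uniq // andbT /=.
  by apply/hasPn => x; rewrite mem_filter => /andP [].
have MPQ : forall x, (x \in P ++ Q) = (0 < x <= n).
  move=> x; rewrite mem_cat mem_filter mem_iota.
  case: (boolP (x \in P)) => Hx /=.
    by move/allP: AP => /(_ x Hx).
  lia.
have SPQ : size (P ++ Q) = n.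
  rewrite (perm_size (uniq_perm UPQ (iota_uniq 1 n) _)) ?size_iota //.
  by move=> x; rewrite MPQ mem_iota; lia.
exists (fun x => (index x (P ++ Q)).+1); split; first split.
- move=> i Hi; rewrite -MPQ -index_mem SPQ in Hi; lia.
- move=> i i' Hi Hi' [] H.
  have Hi1 : i \in P ++ Q by rewrite MPQ.
  have Hi2 : i' \in P ++ Q by rewrite MPQ.
  exact: (index_inj 0 Hi1 Hi2 H).
- move=> i Hi; rewrite index_cat.
  have Hm : nth 0 P i \in P by apply: mem_nth.
  by rewrite Hm index_uniq.
Qed.

Lemma at_map h tau z : z < size tau -> at_ (map h tau) z = h (at_ tau z).
Proof. by move=> Hz; rewrite /at_ (nth_map ev0). Qed.

Lemma max_in (l : seq nat) : l != [::] -> \max_(k <- l) k \in l.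
Proof.
elim: l => // a l IH _; rewrite big_cons.
case: l IH => [|b l] IH; first by rewrite big_nil maxn0 mem_head.
have := IH isT; set M := \max_(_ <- _) _ => HM.
rewrite /maxn; case: ifP => _; first by rewrite in_cons HM orbT.
by rewrite mem_head.
Qed.

Lemma serial_map lam s : (forall j, lam j 0 = 0) -> serial s -> serial (map (rename_d lam) s).
Proof.
move=> H0 Hs u; rewrite size_map => Hu.
have Eup : upto (map (rename_d lam) s) u = upto s u.
  apply: eq_in_filter => k; rewrite mem_iota => Hk.
  by rewrite !at_map //; lia.
rewrite Eup; have := Hs u Hu.
case E: (upto s u) => [|a l].
  by rewrite at_map // /= => ->.
rewrite -E => Hd.
have Hin : \max_(k <- upto s u) k \in upto s u by apply: max_in; rewrite E.
move: Hd Hin; set M := \max_(k <- upto s u) k => Hd.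
rewrite /upto mem_filter mem_iota => /andP [/andP [_ /eqP L] /andP [_ Hk]].
have HM : M < size s by lia.
by rewrite !at_map //= Hd L.
Qed.

Lemma SC_rename lam tau : (forall j, lam j 0 = 0) -> seq_consistent tau ->
  seq_consistent (map (rename_d lam) tau).
Proof.
move=> H0; rewrite /seq_consistent size_map => [[f [H1 H2]]].
exists f; split.
  move=> i u v [[Hu Pu] [[Hv Pv] Huv]]; apply: (H1 i).
  rewrite size_map in Hu Hv.
  rewrite !at_map // in Pu Pv.
set s := [seq _ | _ <- _] in H2.
have -> : [seq at_ (map (rename_d lam) tau) (val ((f^-1)%g k)) | k <- enum 'I_(size tau)] =
          map (rename_d lam) s.
  rewrite /s -map_comp; apply: eq_map => k /=; by rewrite at_map.
exact: serial_map.
Qed.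

Lemma trace_inE (S : nat -> nat -> nat -> seq letter -> Prop) n m v tau :
  memory_system S -> 0 < n -> 0 < m -> 0 < v -> trace_of_v S n m v tau ->
  all (in_E n m v) tau.
Proof.
move=> HS Hn Hm Hv [r [Hr <-]].
have [I [Q [q0 [F [d Hreg]]]]] := HS n m v Hn Hm Hv.
have [Hall _] := (Hreg r).1 Hr.
elim: r Hall {Hr} => // [[e|i] r IH] /= /andP [H1 H2]; rewrite ?H1 IH //.
Qed.

Lemma Oext_transfer (Omega : seq ev -> nat -> nat -> nat -> Prop) tau tau2 g j x y :
  size tau2 = size tau ->
  (forall z, z < size tau -> [/\ op (at_ tau2 z) = op (at_ tau z),
       data (at_ tau2 z) = data (at_ tau z) & loc (at_ tau2 z) = g (loc (at_ tau z))]) ->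
  (forall a b, inLw tau j a -> inLw tau j b -> Omega tau j a b -> a < b) ->
  (forall a b, inLw tau2 (g j) a -> inLw tau2 (g j) b -> a < b -> Omega tau2 (g j) a b) ->
  Oext Omega tau j x y -> Oext Omega tau2 (g j) x y.
Proof.
move=> Hs Hz HO1 HO2.
have tL : forall z, inL tau j z -> inL tau2 (g j) z.
  move=> z [Hz1 Lz]; split; first by rewrite Hs.
  by have [_ _ ->] := Hz z Hz1; rewrite Lz.
have tLw : forall z, inLw tau j z -> inLw tau2 (g j) z.
  move=> z [[Hz1 Lz] Wz]; split; first exact: tL.
  by have [-> _ _] := Hz z Hz1.
move=> [[Hx Lx] [[Hy Ly] C]].
have [Ox Dx _] := Hz x Hx; have [Oy Dy _] := Hz y Hy.
split; first exact: tL.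
split; first exact: tL.
rewrite Ox Oy Dx Dy.
case: C => [C|[C|[a [b [Ha [Hb [Hab [Da Db]]]]]]]]; [left|right;left|right;right] => //.
have [[Ha1 _] _] := Ha; have [[Hb1 _] _] := Hb.
have [_ Da' _] := Hz a Ha1; have [_ Db' _] := Hz b Hb1.
exists a, b; split; first exact: tLw.
split; first exact: tLw.
split; first by apply: HO2; [exact: tLw | exact: tLw | exact: HO1].
by rewrite Da' Db'.
Qed.

Lemma core (S : nat -> nat -> nat -> seq letter -> Prop) (n m : nat)
  (Omega : seq ev -> nat -> nat -> nat -> Prop) :
  memory_system S -> causality S ->
  processor_symmetry S -> location_symmetry S ->
  0 < n -> 0 < m ->
  simple_witness S n m Omega ->
  (forall tau k, trace_of S n m tau -> unambiguous tau ->
     0 < k -> k <= minn n m -> ~ canonical_nice_cycle Omega tau k) ->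
  forall tau, trace_of S n m tau -> unambiguous tau -> seq_consistent tau.
Proof.
move=> HS Hc Hp Hl Hn Hm [_ HOm] Hno tau Htr Hun.
have [v0 [Hv0 Htv]] := Htr.
have AE := trace_inE HS Hn Hm Hv0 Htv.
have inEat : forall z, z < size tau -> in_E n m v0 (at_ tau z).
  by move=> z Hz; move/(all_nthP ev0): AE; apply.
have Hcaus : forall j x, inLr tau j x -> data (at_ tau x) = 0 \/
   exists y, inLw tau j y /\ data (at_ tau y) = data (at_ tau x).
  by move=> j x H; apply: (Hc n m v0 tau Hn Hm Hv0 Htv j x H).
case: (classic (exists len c, Cyc (fun x y => Mb tau x y || Lb tau x y) len c)) => Hcyc;
  last first.
  apply: (SC Hun Hcaus) => len c H; apply: Hcyc; by exists len, c.
exfalso.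
have [len [c Hmin]] := ex_min Hcyc.
have [k [u [v [Hk [Hedges Hdist]]]]] :=
  @extract (Mb tau) (Lb tau) (fun x => proc (at_ tau x)) (fun x => loc (at_ tau x))
    (@Mb_irr tau) (@Lb_irr tau) (@Mb_tr tau) (@Lb_tr tau) (@Mb_sh tau) (@Lb_sh tau) len c Hmin.

set N := size tau.
have HMb : forall x, 0 < x <= k -> Mb tau (u x) (v x) by move=> x Hx; case: (Hedges x Hx).
have HLb : forall x, 0 < x <= k -> Lb tau (v x) (u (succk k x)) by move=> x Hx; case: (Hedges x Hx).
have Hvx : forall x, 0 < x <= k -> v x < N /\ u x < v x /\ proc (at_ tau (u x)) = proc (at_ tau (v x)).
  by move=> x /HMb /andP [/andP [H1 H2] /eqP H3].
have Hux : forall x, 0 < x <= k -> u x < N.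
  by move=> x /Hvx [H1 [H2 _]]; lia.
set p := fun x => proc (at_ tau (u x)).
have prange : forall x, 0 < x <= k -> 0 < p x <= n.
  by move=> x /Hux /inEat /and3P [].
have pinj : forall x y, 0 < x <= k -> 0 < y <= k -> p x = p y -> x = y.
  move=> x y Hx Hy Hxy; case: (x =P y) => // Hne.
  by case: (Hdist x y Hx Hy Hne).
set P := map p (iota 1 k).
have UP : uniq P.
  rewrite map_inj_in_uniq ?iota_uniq // => x y; rewrite !mem_iota => Hx Hy.
  apply: pinj; lia.
have AP : all (fun x => 0 < x <= n) P.
  apply/allP => z /mapP [x]; rewrite mem_iota => Hx ->; apply: prange; lia.
have [f [Hf Hfp]] := mk_perm UP AP.
have SP : size P = k by rewrite size_map size_iota.
have fp : forall x, 0 < x <= k -> f (p x) = x.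
  move=> x Hx; have := Hfp x.-1 ltac:(lia).
  rewrite /P (nth_map 0) ?size_iota ?nth_iota; try lia.
  by rewrite (_ : 1 + x.-1 = x); lia.
have kn : k <= n.
  rewrite -SP -(size_iota 1 n); apply: uniq_leq_size => // z Hz.
  rewrite mem_iota; move/allP: AP => /(_ z Hz); lia.
set pk := fun y => if y == 1 then k else y.-1.
have pkS : forall x, 0 < x <= k -> pk (succk k x) = x.
  by move=> x Hx; rewrite /pk /succk; case: ifP; case: ifP => /=; lia.
have Spk : forall y, 0 < y <= k -> succk k (pk y) = y.
  by move=> y Hy; rewrite /pk /succk; case: ifP; case: ifP => /=; lia.
have pkr : forall y, 0 < y <= k -> 0 < pk y <= k.
  by move=> y Hy; rewrite /pk; case: ifP => /=; lia.
set q := fun y => loc (at_ tau (v (pk y))).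
have qrange : forall y, 0 < y <= k -> 0 < q y <= m.
  by move=> y /pkr /Hvx [H1 _]; have /and3P [_ ? _] := inEat _ H1.
have qinj : forall x y, 0 < x <= k -> 0 < y <= k -> q x = q y -> x = y.
  move=> x y Hx Hy Hxy; case: (pk x =P pk y) => [E|Hne].
    by rewrite -(Spk x Hx) -(Spk y Hy) E.
  by case: (Hdist _ _ (pkr x Hx) (pkr y Hy) Hne).
set Pl := map q (iota 1 k).
have UPl : uniq Pl.
  rewrite map_inj_in_uniq ?iota_uniq // => x y; rewrite !mem_iota => Hx Hy.
  apply: qinj; lia.
have APl : all (fun x => 0 < x <= m) Pl.
  apply/allP => z /mapP [x]; rewrite mem_iota => Hx ->; apply: qrange; lia.
have [g [Hg Hgq]] := mk_perm UPl APl.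
have SPl : size Pl = k by rewrite size_map size_iota.
have gq : forall y, 0 < y <= k -> g (q y) = y.
  move=> y Hy; have := Hgq y.-1 ltac:(lia).
  rewrite /Pl (nth_map 0) ?size_iota ?nth_iota; try lia.
  by rewrite (_ : 1 + y.-1 = y); lia.
have gv : forall x, 0 < x <= k -> g (loc (at_ tau (v x))) = succk k x.
  move=> x Hx; rewrite -(gq (succk k x)); last by rewrite /succk; case: ifP; lia.
  by rewrite /q pkS.
have km : k <= m.
  rewrite -SPl -(size_iota 1 m); apply: uniq_leq_size => // z Hz.
  rewrite mem_iota; move/allP: APl => /(_ z Hz); lia.
set tau2 := map (rename_l g) (map (rename_p f) tau).
have S2 : size tau2 = N by rewrite !size_map.
have at2 : forall z, z < N -> at_ tau2 z =
   Ev (op (at_ tau z)) (f (proc (at_ tau z))) (g (loc (at_ tau z))) (data (at_ tau z)).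
  by move=> z Hz; rewrite !at_map ?size_map.
have Htv2 : trace_of_v S n m v0 tau2.
  by apply: Hl => //; apply: Hp.
have Htr2 : trace_of S n m tau2 by exists v0.
have Hun2 : unambiguous tau2.
  move=> j x [[Hx Lx] Wx]; rewrite S2 in Hx; rewrite at2 // in Lx Wx *.
  rewrite /= in Lx Wx *; have [Dx Hx'] := Hun (loc (at_ tau x)) x (conj (conj Hx (erefl (loc (at_ tau x)))) Wx).
  split=> // y [[Hy Ly] Wy] Hyx; rewrite S2 in Hy; rewrite at2 // in Ly Wy *.
  apply: Hx' => //; split=> //; split=> //.
  have /and3P [_ Lyr _] := inEat _ Hy; have /and3P [_ Lxr _] := inEat _ Hx.
  by apply: Hg.2 => //; rewrite /= in Lx Ly; rewrite Lx Ly.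
apply: (Hno tau2 k Htr2 Hun2 Hk); first by rewrite leq_min kn km.
exists u, v; split.
  move=> x y Hx Hy.
  have [Hvx1 [Hvx2 Hvx3]] := Hvx x Hx; have [Hvy1 [Hvy2 Hvy3]] := Hvx y Hy.
  have Dp : x <> y -> p x <> p y by move=> Hne; case: (Hdist x y Hx Hy Hne).
  split.
    move=> E; case: (x =P y) => [Exy|Hne].
      by subst y; rewrite E ltnn in Hvx2.
    by apply: (Dp Hne); rewrite /p E -Hvy3.
  move=> Hne; split=> E; apply: (Dp Hne); rewrite /p ?E //.
  by rewrite Hvx3 E -Hvy3.
move=> x Hx.
have [Hvx1 [Hvx2 Hvx3]] := Hvx x Hx.
split.
  split; first by split; [rewrite S2; exact: Hux | rewrite at2 /=; [exact: fp | exact: Hux]].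
  split=> //; split; first by rewrite S2.
  by rewrite at2 //= -Hvx3; exact: fp.
rewrite -{1}(gv x Hx).
have HOm' : forall j a b, inLw tau j a -> inLw tau j b -> (Omega tau j a b <-> a < b).
  by move=> j a b; apply: HOm.
apply: (@Oext_transfer Omega tau tau2 g (loc (at_ tau (v x)))); last first.
  exact: (Lb_Oext Hun Hcaus HOm' (HLb x Hx)).
- by move=> a b Ha Hb; move/(HOm tau2 _ a b Htr2 Ha Hb).
- by move=> a b Ha Hb; move/(HOm tau _ a b Htr Ha Hb).
- by move=> z Hz; rewrite at2.
- by rewrite S2.
Qed.

Theorem corollary7p6
  (S : nat -> nat -> nat -> seq letter -> Prop)
  (n m : nat)
  (Omega : seq ev -> nat -> nat -> nat -> Prop) :
  memory_system S ->
  causality S -> data_independence S ->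
  processor_symmetry S -> location_symmetry S ->
  0 < n -> 0 < m ->
  simple_witness S n m Omega ->
  (forall tau k, trace_of S n m tau -> unambiguous tau ->
     0 < k -> k <= minn n m -> ~ canonical_nice_cycle Omega tau k) ->
  forall tau, trace_of S n m tau -> seq_consistent tau.
Proof.
move=> HS Hc Hd Hp Hl Hn Hm Hw Hno tau [v [Hv Htv]].
have AE := trace_inE HS Hn Hm Hv Htv.
have [tau' [lam [Hun [Htr [H0 [_ ->]]]]]] := (Hd n m v tau Hn Hm Hv AE).1 Htv.
apply: SC_rename => //.
exact: (core HS Hc Hp Hl Hn Hm Hw Hno Htr Hun).
Qed.
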